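(* In the setting described in the context, consider the symmetrical case: all users have the same contention window $W$, the same packet error function $e_i=e$ (hence the same $G_i=G$), and the same rate interval $[R_{min},R_{max}]$, with $R_{min}$ sufficiently small and $R_{max}$ sufficiently large that the unique equilibrium $\mathbf R^*$ of $G_R(\mathbf W)$ satisfies $\partial S_i/\partial R_i=0$ for all $i$. Then this equilibrium is symmetrical: $R_i^*=R_j^*$ and $\rho_i^*=\rho_j^*$ for all $i,j\in\mathcal N$.
   Context: Model: users $\mathcal N=\{1,\dots,n\}$, fixed integer $m\ge1$. User $i$ has contention window $W_i$ and data rate $R_i\in[R_{min,i},R_{max,i}]$, and a packet error rate function $e_i$ with values in $[0,1]$; $G_i(R)=(1-e_i(R))R$. For $x\in[0,1]$, $\Gamma_i(x)=\frac{2}{W_i+1+xW_i\sum_{l=0}^{m-1}(2x)^l}$. Given $(W_j,R_j)_j$, the stationary state $(\tau_j,p_j,q_j)_j\in[0,1]^{3n}$ (assumed unique) solves $q_j=1-(1-p_j)(1-e_j(R_j))$, $\tau_j=\Gamma_j(q_j)$, $p_j=1-\prod_{k\ne j}(1-\tau_k)$; $\rho_j=1-\tau_j$. Utility of user $i$: $S_i=\frac{(1-\rho_i)\prod_{j\ne i}\rho_j\,G_i(R_i)}{1-\prod_{j}\rho_j}$. The game $G_R(\mathbf W)$: players $\mathcal N$, strategy sets $[R_{min,i},R_{max,i}]$, utilities $S_i$; it has a unique equilibrium (rate profile from which no player gains by unilateral deviation). Standing assumptions on $e$: $e(0)=0$, $e(R)\to1$ as $R\to\infty$; on the rate interval, $e$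 increasing, twice differentiable, strictly convex with $e'>0$ increasing; $G(0)=0$, $G(R)\to0$ as $R\to\infty$, $G$ strictly concave there. Non-atomic assumption (standing): a change of one user's strategy has negligible influence on the system state; $\prod_{j\ne i}\rho_j$ does not depend on user $i$'s own strategy, and $\prod_{j}\rho_j\simeq\prod_{j\ne i}\rho_j$. *)

(* Defs.v *)
From HB Require Import structures.
From mathcomp Require Import all_boot all_order all_algebra.
From mathcomp Require Import all_classical all_reals all_analysis.
Set Implicit Arguments. Unset Strict Implicit. Unset Printing Implicit Defensive.
Import Order.TTheory GRing.Theory Num.Theory.
Import numFieldNormedType.Exports.
Local Open Scope ring_scope.

Section Model.
Variable R : realType.

Definition Gamma (W m : nat) (x : R) : R :=
  2 / (W%:R + 1 + x * W%:R * \sum_(l < m) (2 * x) ^+ l).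

Definition goodput (e : R -> R) (r : R) : R := (1 - e r) * r.

Definition in01 (x : R) : bool := (0 <= x) && (x <= 1).

Definition stationary (n : nat) (W m : nat) (e : R -> R) (Rs : 'I_n -> R)
    (tau p q : 'I_n -> R) : Prop :=
  forall j : 'I_n,
    [/\ q j = 1 - (1 - p j) * (1 - e (Rs j)),
        tau j = Gamma W m (q j)
      & p j = 1 - \prod_(k < n | k != j) (1 - tau k)].

(* utility of user i, given the profile Rs and the attempt probabilities tau
   of the stationary state (rho_j = 1 - tau_j) *)
Definition utility (n : nat) (e : R -> R) (tau : 'I_n -> R) (i : 'I_n)
    (Rs : 'I_n -> R) : R :=
  (1 - (1 - tau i)) * (\prod_(j < n | j != i) (1 - tau j)) * goodput e (Rs i)
  / (1 - \prod_(j < n) (1 - tau j)).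

Definition upd (n : nat) (Rs : 'I_n -> R) (i : 'I_n) (r : R) : 'I_n -> R :=
  fun j => if j == i then r else Rs j.

Definition in_box (n : nat) (Rmin Rmax : R) (Rs : 'I_n -> R) : Prop :=
  forall j, Rmin <= Rs j <= Rmax.

Definition is_equilibrium (n : nat) (e : R -> R) (Rmin Rmax : R)
    (tauF : ('I_n -> R) -> 'I_n -> R) (Rs : 'I_n -> R) : Prop :=
  in_box Rmin Rmax Rs /\
  forall (i : 'I_n) (r : R), Rmin <= r <= Rmax ->
    utility e (tauF (upd Rs i r)) i (upd Rs i r) <= utility e (tauF Rs) i Rs.

Definition strictly_convex_on (a b : R) (f : R -> R) : Prop :=
  forall x y t : R, a <= x <= b -> a <= y <= b -> x != y -> 0 < t < 1 ->
    f (t * x + (1 - t) * y) < t * f x + (1 - t) * f y.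

Definition strictly_concave_on (a b : R) (f : R -> R) : Prop :=
  strictly_convex_on a b (fun x => - f x).

End Model.

(* Main.v *)
Require Import Defs.
From HB Require Import structures.
From mathcomp Require Import all_boot all_order all_algebra.
From mathcomp Require Import all_classical all_reals all_analysis.
From mathcomp Require Import fingroup perm.
Import Order.TTheory GRing.Theory Num.Theory.
Import numFieldNormedType.Exports.
Local Open Scope classical_set_scope.
Local Open Scope ring_scope.


Section Sym.
Context {R : realType}.

Lemma stat_perm n W m (e : R -> R) (Rs tau p q : 'I_n -> R) (s : {perm 'I_n}) :
  stationary W m e Rs tau p q ->
  stationary W m e (fun k => Rs (s k)) (fun k => tau (s k)) (fun k => p (s k)) (fun k => q (s k)).
Proof.
move=> H j; have [h1 h2 h3] := H (s j); split => //.
rewrite h3; congr (1 - _).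
rewrite (reindex_inj (@perm_inj _ s)) /=; apply: eq_bigl => k.
by rewrite (inj_eq (@perm_inj _ s)).
Qed.

Lemma util_perm n (e : R -> R) (tau Rs : 'I_n -> R) (s : {perm 'I_n}) i :
  utility e (fun k => tau (s k)) i (fun k => Rs (s k)) = utility e tau (s i) Rs.
Proof.
have h1 : \prod_(j < n | j != i) (1 - tau (s j)) = \prod_(j < n | j != s i) (1 - tau j).
  rewrite [RHS](reindex_inj (@perm_inj _ s)) /=; apply: eq_bigl => k.
  by rewrite (inj_eq (@perm_inj _ s)).
have h2 : \prod_(j < n) (1 - tau (s j)) = \prod_(j < n) (1 - tau j).
  by rewrite [RHS](reindex_inj (@perm_inj _ s)).
by rewrite /utility h1 h2.
Qed.

Lemma upd_perm n (Rs : 'I_n -> R) (s : {perm 'I_n}) i r :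
  upd (fun k => Rs (s k)) i r = (fun k => upd Rs (s i) r (s k)).
Proof.
apply: funext => k; rewrite /upd (inj_eq (@perm_inj _ s)) //.
Qed.

End Sym.

Theorem theorem5 (R : realType) (n m W : nat) (e : R -> R) (Rmin Rmax : R)
    (tauF pF qF : ('I_n -> R) -> 'I_n -> R) (Rstar : 'I_n -> R) :
  (1 <= m)%N -> (0 < W)%N -> 0 <= Rmin <= Rmax ->
  (* standing assumptions on the packet error rate function e *)
  (forall r, 0 <= r -> 0 <= e r <= 1) ->
  e 0 = 0 ->
  e x @[x --> +oo] --> (1 : R) ->
  (forall x y, Rmin <= x <= Rmax -> Rmin <= y <= Rmax -> x < y -> e x < e y) ->
  (forall x, Rmin <= x <= Rmax ->
     [/\ derivable e x 1, derivable (derive1 e) x 1 & 0 < derive1 e x]) ->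
  (forall x y, Rmin <= x <= Rmax -> Rmin <= y <= Rmax -> x < y ->
     derive1 e x < derive1 e y) ->
  strictly_convex_on Rmin Rmax e ->
  goodput e 0 = 0 ->
  goodput e x @[x --> +oo] --> (0 : R) ->
  strictly_concave_on Rmin Rmax (goodput e) ->
  (* for every admissible profile, (tauF, pF, qF) is the unique stationary state *)
  (forall Rs, in_box Rmin Rmax Rs ->
     (forall j, [/\ in01 (tauF Rs j), in01 (pF Rs j) & in01 (qF Rs j)]) /\
     stationary W m e Rs (tauF Rs) (pF Rs) (qF Rs)) ->
  (forall Rs, in_box Rmin Rmax Rs -> forall tau p q : 'I_n -> R,
     (forall j, [/\ in01 (tau j), in01 (p j) & in01 (q j)]) ->
     stationary W m e Rs tau p q ->
     [/\ tau = tauF Rs, p = pF Rs & q = qF Rs]) ->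
  (* Rstar is the unique equilibrium of G_R(W) *)
  is_equilibrium e Rmin Rmax tauF Rstar ->
  (forall Rs, is_equilibrium e Rmin Rmax tauF Rs -> Rs = Rstar) ->
  (* first-order condition dS_i/dR_i = 0 at the (interior) equilibrium *)
  (forall i : 'I_n,
     let Si := fun r => utility e (tauF (upd Rstar i r)) i (upd Rstar i r) in
     [/\ Rmin < Rstar i < Rmax, derivable Si (Rstar i) 1 & derive1 Si (Rstar i) = 0]) ->
  forall i j : 'I_n,
    Rstar i = Rstar j /\ 1 - tauF Rstar i = 1 - tauF Rstar j.
Proof.
move=> _ _ _ _ _ _ _ _ _ _ _ _ _ Hst Huniq Heq HeqU _ i j.
have box_perm : forall (Rs : 'I_n -> R) (s : {perm 'I_n}), in_box Rmin Rmax Rs ->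
    in_box Rmin Rmax (fun k => Rs (s k)) by move=> Rs s H k; exact: H.
have tau_perm : forall (Rs : 'I_n -> R) (s : {perm 'I_n}), in_box Rmin Rmax Rs ->
    tauF (fun k => Rs (s k)) = (fun k => tauF Rs (s k)).
  move=> Rs s hb; have [h01 hs] := Hst Rs hb.
  have [-> _ _] := Huniq _ (box_perm Rs s hb) (fun k => tauF Rs (s k))
     (fun k => pF Rs (s k)) (fun k => qF Rs (s k)) (fun k => h01 (s k)) (@stat_perm R n W m e _ _ _ _ s hs).
  by [].
have box_upd : forall (Rs : 'I_n -> R) k r, in_box Rmin Rmax Rs -> Rmin <= r <= Rmax ->
    in_box Rmin Rmax (upd Rs k r).
  by move=> Rs k r hb hr l; rewrite /upd; case: ifP.
set s := tperm i j.
have [hb hE] := Heq.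
have E : is_equilibrium e Rmin Rmax tauF (fun k => Rstar (s k)).
  split; first exact: box_perm.
  move=> k r hr; rewrite upd_perm tau_perm; last exact: box_upd.
  rewrite util_perm tau_perm // util_perm; exact: hE.
have := HeqU _ E => Hs.
have Ht : (fun k => tauF Rstar (s k)) = tauF Rstar by rewrite -tau_perm // Hs.
split.
  have := congr1 (fun f => f i) Hs; rewrite /= /s tpermL => ->; by [].
have := congr1 (fun f => f i) Ht; rewrite /= /s tpermL => ->; by [].
Qed.
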